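(* Let $P$ be a poset on $\{1,\ldots,n\}$ and $k$ a field. The ideal $\mathcal{I}_P$ of the ring $R_P$ is a principal ideal if and only if $P$ satisfies the labelled-$\delta$-chain condition. Furthermore, in this case $\mathcal{I}_P$ is generated by $\mathbf{x}^{\delta}$, i.e. $f_{\min}=\delta$, where $f_{\min}\in\mathcal{A}(P)$ is the element with $f_{\min}+\mathcal{A}^{\mathrm{weak}}(P)=\mathcal{A}(P)$.
   Context: All posets are finite, on labels $\{1,\ldots,n\}$. $\mathcal{A}^{\mathrm{weak}}(P)$ is the set of maps $f:\{1,\ldots,n\}\to\mathbb{N}$ with $f(i)\ge f(j)$ whenever $i<_Pj$; $\mathcal{A}(P)\subseteq\mathcal{A}^{\mathrm{weak}}(P)$ consists of those $f$ with additionally $f(i)>f(j)$ whenever $i<_Pj$ and $i>j$ as integers. $R_P\subseteq k[x_1,\ldots,x_n]$ is the span of $\mathbf{x}^f=\prod_ix_i^{f(i)}$, $f\in\mathcal{A}^{\mathrm{weak}}(P)$, and $\mathcal{I}_P$ is the ideal of $R_P$ spanned by $\mathbf{x}^f$, $f\in\mathcal{A}(P)$; $\mathcal{I}_P$ is principal if and only if there is $f_{\min}\in\mathcal{A}(P)$ with $f_{\min}+\mathcal{A}^{\mathrm{weak}}(P)=\mathcal{A}(P)$. A covering relation $i\lessdot_Pj$ is strict if $i>j$ as integers. $\delta(i)$ is the maximum, over all saturated chains in $P_{\ge i}$ starting at $i$, of the number of strict covering relations in the chain. $P$ satisfies the labelled-$\delta$-chain condition if for every $i$, all saturated chains from $i$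 to a maximal element of $P_{\ge i}$ have the same number $\delta(i)$ of strict covering relations. *)

(* Defs.v *)
From HB Require Import structures.
From mathcomp Require Import all_boot all_order all_algebra.
From mathcomp Require Import mpoly.
Set Implicit Arguments. Unset Strict Implicit. Unset Printing Implicit Defensive.
Import GRing.Theory.

(* Labels {1,...,n} are represented by 'I_n (label i+1 <-> ordinal i);
   the shift preserves the integer comparison of labels. *)
Section Poset.
Variable n : nat.
Variable le : rel 'I_n.

Definition is_poset : Prop :=
  [/\ reflexive le, antisymmetric le & transitive le].

Definition ltP (i j : 'I_n) : bool := (i != j) && le i j.

Definition coversP (i j : 'I_n) : bool :=
  ltP i j && [forall z, ~~ (ltP i z && ltP z j)].

(* A saturated chain starting at i is i :: s with path coversP i s.
   Number of strict covering relations (c <. c' with c > c' as integers). *)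
Definition nstrict (i : 'I_n) (s : seq 'I_n) : nat :=
  count id (pairmap (fun a b : 'I_n => (b < a)%N) i s).

(* delta(i): maximum over saturated chains starting at i of the number of
   strict covers.  Such chains have at most n elements, so ranging over
   chains with at most n steps covers all of them. *)
Definition delta (i : 'I_n) : nat :=
  \max_(k < n.+1) \max_(t : k.-tuple 'I_n | path coversP i t) nstrict i t.

Definition maximalP (x : 'I_n) : Prop := forall y, le x y -> y = x.

(* labelled-delta-chain condition; maximal elements of P_{>=i} are exactly the
   maximal elements of P lying above i. *)
Definition labelled_delta_chain : Prop :=
  forall (i : 'I_n) (s : seq 'I_n),
    path coversP i s -> maximalP (last i s) -> nstrict i s = delta i.

Definition Aweak (f : 'I_n -> nat) : Prop :=
  forall i j, ltP i j -> (f j <= f i)%N.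

Definition Astrict (f : 'I_n -> nat) : Prop :=
  Aweak f /\ (forall i j, ltP i j -> (j < i)%N -> (f j < f i)%N).

Variable k : fieldType.

Definition inRP (p : {mpoly k[n]}) : Prop :=
  forall m : 'X_{1..n}, m \in msupp p -> Aweak (fun i => m i).

Definition inIP (p : {mpoly k[n]}) : Prop :=
  forall m : 'X_{1..n}, m \in msupp p -> Astrict (fun i => m i).

Definition IP_generated_by (g : {mpoly k[n]}) : Prop :=
  inRP g /\ forall p, inIP p <-> exists2 r, inRP r & p = (g * r)%R.

Definition IP_principal : Prop := exists g, IP_generated_by g.

End Poset.

(* Main.v *)
Require Import Defs.
From HB Require Import structures.
From mathcomp Require Import all_boot all_order all_algebra.
From mathcomp Require Import mpoly.
From mathcomp Require Import zify.
Import Defs.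
Import GRing.Theory.
Set Implicit Arguments. Unset Strict Implicit. Unset Printing Implicit Defensive.

Section Comb.
Variable n : nat.
Variable le : rel 'I_n.
Hypothesis hP : is_poset le.

Let leR : reflexive le. Proof. by case: hP. Qed.
Let leA : antisymmetric le. Proof. by case: hP. Qed.
Let leT : transitive le. Proof. by case: hP. Qed.

Lemma ltP_le i j : ltP le i j -> le i j.
Proof. by case/andP. Qed.

Lemma ltP_trans : transitive (ltP le).
Proof.
move=> j i k /andP[nij lij] /andP[njk ljk]; apply/andP; split; last exact: leT ljk.
apply/eqP=> eik; subst k; move/negP: nij; apply; apply/eqP; apply: leA; by rewrite lij ljk.
Qed.

Lemma ltP_irr : irreflexive (ltP le).
Proof. by move=> i; rewrite /ltP eqxx. Qed.

Lemma ltP_asym i j : ltP le i j -> le j i -> False.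
Proof.
move=> /andP[nij lij] lji; move/negP: nij; apply; apply/eqP; apply: leA; by rewrite lij lji.
Qed.

Lemma cov_lt i j : coversP le i j -> ltP le i j.
Proof. by case/andP. Qed.

Lemma path_ltP i s : path (coversP le) i s -> path (ltP le) i s.
Proof. by apply: sub_path => x y; apply: cov_lt. Qed.

Lemma path_lt i s : path (coversP le) i s -> s != [::] -> ltP le i (last i s).
Proof.
elim: s i => [//|a s IH] i /= /andP[cia ps] _.
case: s IH ps => [|b s] IH ps /=; first exact: cov_lt.
apply: ltP_trans (cov_lt cia) _; exact: IH ps _.
Qed.

Lemma path_le i s : path (coversP le) i s -> le i (last i s).
Proof.
case: s => [|a s] p; first exact: leR.
by apply: ltP_le; apply: path_lt p _.
Qed.

Lemma path_size i s : path (coversP le) i s -> size s < n.+1.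
Proof.
move=> p; have u : uniq (i :: s).
  apply: (sorted_uniq ltP_trans ltP_irr); exact: path_ltP.
have := uniq_leq_size (s2 := enum 'I_n) u (fun x _ => mem_enum _ x).
rewrite size_enum_ord /=; lia.
Qed.

Definition Fw (w : 'I_n -> nat) (i : 'I_n) : nat :=
  \max_(k < n.+1) \max_(t : k.-tuple 'I_n | path (coversP le) i t)
     (nstrict i t + w (last i t)).

Lemma delta_Fw i : delta le i = Fw (fun _ => 0) i.
Proof. by apply: eq_bigr => k _; apply: eq_bigr => t _; rewrite addn0. Qed.

Lemma F1 w i s : path (coversP le) i s -> nstrict i s + w (last i s) <= Fw w i.
Proof.
move=> p; have hs := path_size p.
apply: leq_trans (leq_bigmax (Ordinal hs)).
exact: (@leq_bigmax_cond _ (fun t : (size s).-tuple 'I_n => path (coversP le) i t)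
        (fun t : (size s).-tuple 'I_n => nstrict i t + w (last i t)) (in_tuple s) p).
Qed.

Lemma F2 w i : exists2 s, path (coversP le) i s & Fw w i = nstrict i s + w (last i s).
Proof.
have [k0 Ek] := @eq_bigmax _ (fun k : 'I_n.+1 =>
   \max_(t : k.-tuple 'I_n | path (coversP le) i t) (nstrict i t + w (last i t)))
   (ltac:(by rewrite card_ord)) .
case: (boolP [exists t : k0.-tuple 'I_n, path (coversP le) i t]) => [/existsP [t0 pt0]|ne].
  have [t Pt Et] := @eq_bigmax_cond _ (fun t : k0.-tuple 'I_n => path (coversP le) i t)
     (fun t : k0.-tuple 'I_n => nstrict i t + w (last i t))
     (ltac:(by apply/card_gt0P; exists t0)).
  rewrite /Fw Ek.
  exists (val t) => //; exact: Et.
exists [::] => //.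
have H0 : Fw w i = 0.
  rewrite /Fw Ek big_pred0 // => t; apply/negP => pt; move/negP: ne; apply.
  by apply/existsP; exists t.
have := F1 w (i := i) (s := [::]) isT; rewrite H0 /=; lia.
Qed.


Lemma nstrict_cons (i a : 'I_n) s : nstrict i (a :: s) = (a < i) + nstrict a s.
Proof. by []. Qed.

Lemma nstrict_cat (i : 'I_n) c d : nstrict i (c ++ d) = nstrict i c + nstrict (last i c) d.
Proof. by rewrite /nstrict pairmap_cat count_cat. Qed.

Lemma nstrict_desc (x : 'I_n) c : (last x c < x)%N -> 0 < nstrict x c.
Proof.
elim: c x => [|a c IH] x /=; first by rewrite ltnn.
rewrite nstrict_cons; case: (ltnP a x) => //= hax hl.
by apply: IH; apply: leq_trans hl hax.
Qed.

Lemma chain_aux m : forall x y, #|[pred z | le x z && le z y]| <= m -> ltP le x y ->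
  exists2 c, path (coversP le) x c & last x c = y.
Proof.
elim: m => [|m IH] x y hc hxy.
  have : 0 < #|[pred z | le x z && le z y]|.
    by apply/card_gt0P; exists x; rewrite inE leR ltP_le.
  by rewrite leqn0 in hc; rewrite (eqP hc).
case: (boolP (coversP le x y)) => [cxy|ncxy].
  by exists [:: y] => //=; rewrite cxy.
have [z /andP[xz zy]] : exists z, ltP le x z && ltP le z y.
  move: ncxy; rewrite /coversP hxy /= => /forallPn [z]; rewrite negbK => h; by exists z.
have [c1 p1 l1] : exists2 c, path (coversP le) x c & last x c = z.
  apply: IH xz; rewrite -ltnS; apply: leq_trans hc; apply: proper_card.
  apply/properP; split.
    apply/subsetP => w; rewrite !inE => /andP[-> wz] /=; exact: leT wz (ltP_le zy).
  exists y; first by rewrite !inE leR (ltP_le hxy).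
  by rewrite !inE; apply/andP => -[_ yz]; apply: ltP_asym zy yz.
have [c2 p2 l2] : exists2 c, path (coversP le) z c & last z c = y.
  apply: IH zy; rewrite -ltnS; apply: leq_trans hc; apply: proper_card.
  apply/properP; split.
    apply/subsetP => w; rewrite !inE => /andP[zw ->]; rewrite andbT; exact: leT (ltP_le xz) zw.
  exists x; first by rewrite !inE leR (ltP_le hxy).
  by rewrite !inE; apply/andP => -[zx _]; apply: ltP_asym xz zx.
exists (c1 ++ c2); first by rewrite cat_path p1 l1.
by rewrite last_cat l1.
Qed.

Lemma chain_ex x y : ltP le x y -> exists2 c, path (coversP le) x c & last x c = y.
Proof. exact: chain_aux. Qed.

Lemma maximal_ex x : exists2 c, path (coversP le) x c & maximalP le (last x c).
Proof.
case: (@arg_minnP _ x (fun y => le x y) (fun y => #|[pred z | le y z]|) (leR x)) => y xy hmin.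
have my : maximalP le y.
  move=> z yz; apply/eqP; apply/negPn/negP => nzy.
  have := hmin z (leT xy yz); apply/negP; rewrite -ltnNge; apply: proper_card.
  apply/properP; split.
    apply/subsetP => w; rewrite !inE => zw; exact: leT yz zw.
  exists y; first by rewrite inE leR.
  rewrite inE; apply/negP => zy; move/negP: nzy; apply; apply/eqP; apply: leA; by rewrite zy yz.
case: (eqVneq x y) => [exy|nxy]; first by exists [::] => //=; rewrite exy.
have hxy : Defs.ltP le x y by rewrite /Defs.ltP nxy xy.
have [c pc lc] := chain_ex hxy.
by exists c; rewrite // lc.
Qed.

Lemma A_chain f x c : Astrict le f -> path (coversP le) x c -> f (last x c) + nstrict x c <= f x.
Proof.
move=> [hw hs]; elim: c x => [|a c IH] x /=; first by rewrite addn0.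
move=> /andP[cxa pc]; rewrite nstrict_cons.
have := IH a pc; have := hw _ _ (cov_lt cxa).
case: (ltnP a x) => h; last by move=> h1 h2 /=; rewrite add0n; exact: leq_trans h2 h1.
have := hs _ _ (cov_lt cxa) h => h3 _ h2 /=; lia.
Qed.

Lemma delta_min f i : Astrict le f -> delta le i <= f i.
Proof.
move=> hf; have [s ps Es] := F2 (fun _ => 0) i.
rewrite delta_Fw Es addn0; have := A_chain hf ps; lia.
Qed.

Lemma Fw_mono w x y : ltP le x y -> Fw w y + (y < x) <= Fw w x.
Proof.
move=> hxy; have [c pc lc] := chain_ex hxy.
have [s ps Es] := F2 w y.
have := F1 w (s := c ++ s) (i := x); rewrite cat_path pc lc ps => /(_ isT).
rewrite nstrict_cat last_cat lc Es.
have : (y < x) <= nstrict x c.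
  case: ltnP => //= h; apply: nstrict_desc; by rewrite lc.
lia.
Qed.

Lemma Fw_strict w : Astrict le (Fw w).
Proof.
split=> i j hij; have := Fw_mono w hij; last by move=> h1 h2; rewrite h2 in h1; lia.
lia.
Qed.

Lemma delta_strict : Astrict le (delta le).
Proof.
have [h1 h2] := Fw_strict (fun _ => 0).
split=> i j; rewrite !delta_Fw; [exact: h1 | exact: h2].
Qed.


Lemma delta_chain (hL : labelled_delta_chain le) x c :
  path (coversP le) x c -> delta le x = nstrict x c + delta le (last x c).
Proof.
move=> pc; have [d pd md] := maximal_ex (last x c).
have e1 := hL _ _ pd md.
have := hL x (c ++ d); rewrite cat_path pc pd last_cat => /(_ isT md).
by rewrite nstrict_cat e1.
Qed.

Lemma decomp (hL : labelled_delta_chain le) f :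
  Astrict le f -> exists2 h, Aweak le h & f =1 (fun i => delta le i + h i).
Proof.
move=> hf; exists (fun i => f i - delta le i); last first.
  by move=> i /=; have := delta_min i hf; lia.
move=> x y hxy; have [c pc lc] := chain_ex hxy.
have e := delta_chain hL pc; rewrite lc in e.
have := A_chain hf pc; rewrite lc.
have := delta_min x hf; have := delta_min y hf; lia.
Qed.

Lemma compose f h : Aweak le h -> f =1 (fun i => delta le i + h i) -> Astrict le f.
Proof.
move=> hw ef; have [d1 d2] := delta_strict; split => i j hij; rewrite !ef.
  by apply: leq_add; [exact: d1 | exact: hw].
by move=> ji; apply: leq_trans (leq_add (d2 _ _ hij ji) (hw _ _ hij)); rewrite addSn.
Qed.

Lemma ldc_of_covers :
  (forall i j, coversP le i j -> delta le i = delta le j + (j < i)) -> labelled_delta_chain le.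
Proof.
move=> hc i s; elim: s i => [|a s IH] i /=.
  move=> _ mi; have [s ps Es] := F2 (fun _ => 0) i; rewrite delta_Fw Es addn0.
  case: s ps {Es} => [//|b s] ps.
  have := path_lt ps isT => lt; have := mi _ (ltP_le lt) => e.
  by rewrite e ltP_irr in lt.
move=> /andP[cia ps] ml; rewrite nstrict_cons (IH _ ps ml) (hc _ _ cia); lia.
Qed.

Lemma ldc_of_key :
  (forall f, Astrict le f -> exists2 h, Aweak le h & f =1 (fun i => delta le i + h i)) ->
  labelled_delta_chain le.
Proof.
move=> key; apply: ldc_of_covers => i j cij.
apply/eqP; apply/negPn/negP => bad.
have hge := Fw_mono (fun _ => 0) (cov_lt cij); rewrite -!delta_Fw in hge.
have gap : delta le j + (j < i) < delta le i by rewrite ltn_neqAle eq_sym bad hge.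
pose w := fun z : 'I_n => if z == j then (delta le j).+1 else 0.
have Fj : (delta le j).+1 <= Fw w j by have := F1 w (i := j) (s := [::]) isT; rewrite /w eqxx.
have Fi : Fw w i <= delta le i.
  have [s ps Es] := F2 w i; rewrite Es.
  case: (eqVneq (last i s) j) => [lj|nlj]; last first.
    rewrite /w (negbTE nlj) delta_Fw; have := F1 (fun _ => 0) ps; lia.
  rewrite /w lj eqxx.
  case: s ps lj {Es} => [|a s] ps lj.
    by move: cij; rewrite -lj /= /coversP ltP_irr.
  move: ps => /= /andP[cia ps].
  have aj : a = j.
    apply/eqP; apply/negPn/negP => naj.
    have laj : ltP le a j by rewrite /Defs.ltP naj -lj; exact: path_le ps.
    move: cij => /andP[_ /forallP /(_ a)]; by rewrite (cov_lt cia) laj.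
  subst a; case: s ps lj => [|b s] ps lj.
    rewrite nstrict_cons /nstrict /=; lia.
  have := path_lt ps isT; rewrite /= in lj *; by rewrite lj ltP_irr.
have [h hw eh] := key _ (Fw_strict w).
have := hw _ _ (cov_lt cij); move: Fj Fi; rewrite !eh; lia.
Qed.

End Comb.

Section Poly.
Variable n : nat.
Variable le : rel 'I_n.
Hypothesis hP : is_poset le.
Variable k : fieldType.
Local Open Scope ring_scope.

Local Notation md := [multinom delta le i | i < n].
Local Notation Xd := ('X_[md] : {mpoly k[n]}).

Lemma Xd_IP : inIP le Xd.
Proof.
move=> m; rewrite msuppX mem_seq1 => /eqP ->.
have [h1 h2] := delta_strict hP; split => i j; rewrite !mnmE; [exact: h1 | exact: h2].
Qed.

Lemma Xd_RP : inRP le Xd.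
Proof. by move=> m /Xd_IP []. Qed.

Lemma principal_key : IP_principal le k ->
  forall f, Astrict le f -> exists2 h, Aweak le h & f =1 (fun i => (delta le i + h i)%N).
Proof.
move=> [g [gR gI]].
have gIP : inIP le g.
  apply/gI; exists 1; last by rewrite mulr1.
  move=> m; rewrite msupp1 mem_seq1 => /eqP -> i j _; by rewrite mnm0E.
have [r rR er] := (gI Xd).1 Xd_IP.
have nzX : Xd != 0 by rewrite -msupp_eq0 msuppX.
have nzg : g != 0 by apply: contraNneq nzX => g0; rewrite er g0 mul0r.
have nzr : r != 0 by apply: contraNneq nzX => r0; rewrite er r0 mulr0.
have el : md = (mlead g + mlead r)%MM by rewrite -mleadM // -er mleadXm.
have lr0 : mlead r = 0%MM.
  apply/mnmP => i; rewrite mnm0E.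
  have := delta_min hP i (gIP _ (mlead_supp nzg)).
  move/(congr1 (fun m : 'X_{1..n} => m i)): el; rewrite mnmDE mnmE; lia.
have rC : r = (r@_0)%:MP by apply: msize1_polyC; rewrite -mlead_deg // lr0 mdeg0.
have c0 : r@_0 != 0 by apply: contraNneq nzr => c0; rewrite rC c0.
have eg : g = (r@_0)^-1 *: Xd.
  by rewrite er {2}rC mulrC mul_mpolyC scalerA mulVf // scale1r.
have suppg : forall a, a \in msupp g -> a = md.
  move=> a; rewrite eg => /msuppZ_le; by rewrite msuppX mem_seq1 => /eqP.
move=> f hf; pose mf := [multinom f i | i < n].
have fIP : inIP le ('X_[mf] : {mpoly k[n]}).
  move=> m; rewrite msuppX mem_seq1 => /eqP ->.
  have [h1 h2] := hf; split => i j; rewrite !mnmE; [exact: h1 | exact: h2].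
have [r' r'R er'] := (gI _).1 fIP.
have : mf \in msupp ('X_[mf] : {mpoly k[n]}) by rewrite msuppX mem_seq1.
rewrite er' => /msuppM_le /allpairsP [[a b] /= [ag br emf]].
exists (fun i => b i); first exact: r'R.
by move=> i; rewrite -[f i](mnmE f) -/mf emf (suppg _ ag) mnmDE mnmE.
Qed.

Lemma gen_of_key :
  (forall f, Astrict le f <-> exists2 h, Aweak le h & f =1 (fun i => (delta le i + h i)%N)) ->
  IP_generated_by le Xd.
Proof.
move=> key; split; first exact: Xd_RP.
move=> p; split.
  move=> pI.
  exists (\sum_(u <- msupp p) p@_u *: 'X_[u - md]).
    move=> m /msupp_sum_le /flattenP [s /mapP [u]]; rewrite filter_predT => up -> ms.
    have := msuppZ_le ms; rewrite msuppX mem_seq1 => /eqP ->.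
    have [h hw eh] := (key _).1 (pI _ up).
    move=> i j hij; rewrite !mnmBE !mnmE !eh; have := hw _ _ hij; lia.
  rewrite mulr_sumr [LHS]mpolyE; apply: eq_big_seq => u up.
  rewrite -scalerAr -mpolyXD; congr (_ *: 'X_[_]).
  apply/mnmP => i; rewrite mnmDE mnmBE mnmE.
  have [h hw eh] := (key _).1 (pI _ up); rewrite eh; lia.
move=> [r rR ->] m /msuppM_le /allpairsP [[a b] /= [ag br ->]].
move: ag; rewrite msuppX mem_seq1 => /eqP ->.
apply/key; exists (fun i => b i); first exact: rR.
by move=> i; rewrite mnmDE mnmE.
Qed.

End Poly.

Theorem proposition9p5 (n : nat) (le : rel 'I_n) (k : fieldType) :
  is_poset le ->
  (IP_principal le k <-> labelled_delta_chain le) /\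
  (labelled_delta_chain le ->
     @IP_generated_by n le k 'X_[[multinom delta le i | i < n]] /\
     Astrict le (delta le) /\
     (forall f, Astrict le f <-> exists2 h, Aweak le h & f =1 (fun i => delta le i + h i)%N)).
Proof.
move=> hP.
have keyL : labelled_delta_chain le ->
  forall f, Astrict le f <-> exists2 h, Aweak le h & f =1 (fun i => delta le i + h i)%N.
  move=> hL f; split; first exact: decomp hP hL f.
  by move=> [h hw eh]; apply: (compose hP hw eh).
split.
  split; first by move=> pr; apply: (ldc_of_key hP); exact: (principal_key hP pr).
  by move=> hL; exists 'X_[[multinom delta le i | i < n]]; apply: (gen_of_key hP); exact: keyL.
move=> hL; split; first by apply: (gen_of_key hP); exact: keyL.
split; [exact: delta_strict hP | exact: keyL].
Qed.
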